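(* Let \(X\) be a nonempty set and let \(\Phi\) be a mapping with domain \(X^{2}\) such that \(|\Phi(X^{2})| \leqslant \aleph_{0}\). Then the following conditions are equivalent. (i) \(\Phi\) is combinatorially similar to an ultrametric \(d \colon X^{2} \to [0,\infty)\) satisfying \(d(X^{2}) \subseteq \mathbb{Q}^{+}\), where \(\mathbb{Q}^{+} = \mathbb{Q} \cap [0,\infty)\). (ii) \(\Phi\) is combinatorially similar to an ultrametric. (iii) \(\Phi\) is symmetric, the transitive closure \(u_{\Phi}^{t}\) of the binary relation \(u_{\Phi}\) is antisymmetric, the equality \(\Phi^{-1}(a_0) = \Delta_{X}\) holds for some \(a_0 \in \Phi(X^{2})\), where \(\Delta_X=\{\langle x,x\rangle: x\in X\}\), and for every triple \(\langle x_1, x_2, x_3\rangle\) of points of \(X\) there is a permutation \((i_1,i_2,i_3)\) of \((1,2,3)\) such that \(\Phi(x_{i_1}, x_{i_2}) = \Phi(x_{i_2}, x_{i_3})\).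
   Context: For a mapping \(F\) with domain \(A\), \(F(A)\) denotes its range. An ultrametric on a set \(Z\) is a symmetric function \(d\colon Z^2\to[0,\infty)\) with \(d(x,y)=0\) iff \(x=y\), and \(d(x,y)\le \max\{d(x,z),d(z,y)\}\) for all \(x,y,z\in Z\). For nonempty sets \(X,Y\) and mappings \(\Phi\) with domain \(X^2\), \(\Psi\) with domain \(Y^2\), \(\Phi\) is combinatorially similar to \(\Psi\) if there are bijections \(f\colon \Phi(X^2)\to\Psi(Y^2)\) and \(g\colon Y\to X\) with \(\Psi(x,y)=f(\Phi(g(x),g(y)))\) for all \(x,y\in Y\). For \(\Phi\) with domain \(X^2\) and \(Y=\Phi(X^2)\), \(u_\Phi\subseteq Y^2\) is the relation: \(\langle y_1,y_2\rangle\in u_\Phi\) iff there are \(x_1,x_2,x_3\in X\) with \(y_1=\Phi(x_1,x_3)\) and \(y_2=\Phi(x_1,x_2)=\Phi(x_2,x_3)\). The transitive closure of a relation \(\gamma\) is \(\gamma^t=\bigcup_{n\ge1}\gamma^n\), where \(\gamma^1=\gamma\), \(\gamma^{n+1}=\gamma^n\circ\gamma\) and \(\langle x,y\rangle\in\alpha\circ\beta\) iff there is \(z\) with \(\langle x,z\rangle\in\alpha\), \(\langle z,y\rangle\in\beta\). *)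

(* Defs.v *)
From Stdlib Require Import Reals QArith Qreals.
From mathcomp Require Import all_boot all_fingroup.

Set Implicit Arguments.
Unset Strict Implicit.

Definition in_range {X A : Type} (Phi : X -> X -> A) (a : A) : Prop :=
  exists x y, Phi x y = a.

Definition countable_range {X A : Type} (Phi : X -> X -> A) : Prop :=
  exists h : A -> nat, forall a b, in_range Phi a -> in_range Phi b -> h a = h b -> a = b.

Definition ultrametric {Z : Type} (d : Z -> Z -> R) : Prop :=
  (forall x y, Rle R0 (d x y)) /\
  (forall x y, d x y = d y x) /\
  (forall x y, d x y = R0 <-> x = y) /\
  (forall x y z, Rle (d x y) (Rmax (d x z) (d z y))).

Definition bij_between_ranges {X Y A B : Type}
  (Phi : X -> X -> A) (Psi : Y -> Y -> B) (f : A -> B) : Prop :=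
  (forall a, in_range Phi a -> in_range Psi (f a)) /\
  (forall a a', in_range Phi a -> in_range Phi a' -> f a = f a' -> a = a') /\
  (forall b, in_range Psi b -> exists a, in_range Phi a /\ f a = b).

Definition comb_similar {X Y A B : Type}
  (Phi : X -> X -> A) (Psi : Y -> Y -> B) : Prop :=
  exists (f : A -> B) (g : Y -> X),
    bij_between_ranges Phi Psi f /\ bijective g /\
    forall x y, Psi x y = f (Phi (g x) (g y)).

Definition u_rel {X A : Type} (Phi : X -> X -> A) (y1 y2 : A) : Prop :=
  exists x1 x2 x3, y1 = Phi x1 x3 /\ y2 = Phi x1 x2 /\ y2 = Phi x2 x3.

Fixpoint rel_pow {A : Type} (g : A -> A -> Prop) (n : nat) : A -> A -> Prop :=
  match n with
  | O => g
  | S k => fun x y => exists z, rel_pow g k x z /\ g z y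
  end.
(* rel_pow g n = gamma^(n+1); transitive closure = union over all n. *)
Definition tclosure {A : Type} (g : A -> A -> Prop) (x y : A) : Prop :=
  exists n, rel_pow g n x y.

Definition antisymmetric_rel {A : Type} (r : A -> A -> Prop) : Prop :=
  forall a b, r a b -> r b a -> a = b.

Definition nonneg_rational (r : R) : Prop :=
  exists q : Q, Qle (0#1) q /\ Q2R q = r.

Definition triple_of {X : Type} (x1 x2 x3 : X) (i : 'I_3) : X :=
  nth x1 [:: x1; x2; x3] i.

(* Main.v *)
Require Import Defs.
From Stdlib Require Import Reals QArith Qreals.
From mathcomp Require Import all_boot all_fingroup.
From Stdlib Require Import Lqa Lra ClassicalEpsilon Classical.
Ltac qlra := Lqa.lra.
Ltac rlra := Lra.lra.

Lemma lemA0 (n : nat) (lo : nat -> Prop) (v : nat -> Q) :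
  exists a, (forall i, (i < n)%N -> lo i -> (v i <= a)%Q) /\
     ((exists i0, (i0 < n)%N /\ lo i0 /\ a = v i0) \/ (forall i, (i < n)%N -> ~ lo i)).
Proof.
elim: n => [|n [a [Ha1 Ha2]]].
  by exists 0%Q; split=> //; right.
case: (classic (lo n)) => Hlo.
  case: Ha2 => [[i0 [Hi0 [Hl0 Ea]]]|Hno].
    subst a; case: (Qlt_le_dec (v i0) (v n)) => Hav.
    - exists (v n); split.
      + move=> i; rewrite ltnS leq_eqVlt => /orP[/eqP->|Hi] Hl; first qlra.
        have := Ha1 i Hi Hl; qlra.
      + by left; exists n.
    - exists (v i0); split.
      + move=> i; rewrite ltnS leq_eqVlt => /orP[/eqP->//|Hi] Hl; auto.
      + by left; exists i0; split=> //; apply: ltnW.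
  exists (v n); split.
  + move=> i; rewrite ltnS leq_eqVlt => /orP[/eqP->|Hi] Hl; first qlra.
    by case: (Hno i Hi Hl).
  + by left; exists n.
exists a; split.
+ move=> i; rewrite ltnS leq_eqVlt => /orP[/eqP->//|Hi] Hl; auto.
+ case: Ha2 => [[i0 [Hi0 [Hl0 Ea]]]|Hno].
  - by left; exists i0; split=> //; apply: ltnW.
  - right=> i; rewrite ltnS leq_eqVlt => /orP[/eqP->//|Hi]; auto.
Qed.

Lemma lemLow (n : nat) (v : nat -> Q) : exists c, forall j, (j < n)%N -> (c < v j)%Q.
Proof.
elim: n => [|n [c Hc]]; first by exists 0%Q.
case: (Qlt_le_dec c (v n)) => H.
- exists c => j; rewrite ltnS leq_eqVlt => /orP[/eqP->//|Hj]; auto.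
- exists (v n - 1)%Q => j; rewrite ltnS leq_eqVlt => /orP[/eqP->|Hj]; first qlra.
  have := Hc j Hj; qlra.
Qed.

Lemma lemA (n : nat) (lo up : nat -> Prop) (v : nat -> Q) :
  (forall i j, (i < n)%N -> (j < n)%N -> lo i -> up j -> (v i < v j)%Q) ->
  exists a, (forall i, (i < n)%N -> lo i -> (v i <= a)%Q) /\
            (forall j, (j < n)%N -> up j -> (a < v j)%Q).
Proof.
move=> H; have [a [Ha1 [[i0 [Hi0 [Hl0 Ea]]]|Hno]]] := lemA0 n lo v.
- subst a; exists (v i0); split=> // j Hj Hu; exact: H.
- have [c Hc] := lemLow n v.
  exists c; split=> [i Hi Hl|j Hj _]; [by case: (Hno i Hi Hl)| exact: Hc].
Qed.

Lemma lemB (n : nat) (a : Q) (v : nat -> Q) :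
  exists b, (a < b)%Q /\ (forall j, (j < n)%N -> (a < v j)%Q -> (b <= v j)%Q).
Proof.
elim: n => [|n [b [Hb1 Hb2]]].
  by exists (a + 1)%Q; split=> //; qlra.
case: (Qlt_le_dec a (v n)) => Hav.
- case: (Qlt_le_dec b (v n)) => Hbv.
  + exists b; split=> // j; rewrite ltnS leq_eqVlt => /orP[/eqP->|Hj]; first qlra.
    exact: Hb2.
  + exists (v n); split=> // j; rewrite ltnS leq_eqVlt => /orP[/eqP->|Hj]; first qlra.
    move=> Hj'; have := Hb2 j Hj Hj'; qlra.
- exists b; split=> // j; rewrite ltnS leq_eqVlt => /orP[/eqP->|Hj]; first qlra.
  exact: Hb2.
Qed.

Lemma lemC (n : nat) (lo up : nat -> Prop) (v : nat -> Q) :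
  (forall i j, (i < n)%N -> (j < n)%N -> lo i -> up j -> (v i < v j)%Q) ->
  exists r, (forall i, (i < n)%N -> lo i -> (v i < r)%Q) /\
            (forall j, (j < n)%N -> up j -> (r < v j)%Q) /\
            (forall j, (j < n)%N -> ~ (r == v j)%Q).
Proof.
move=> H; have [a [Ha1 Ha2]] := lemA _ _ _ _ H.
have [b [Hb1 Hb2]] := lemB n a v.
exists ((a + b) * (1#2))%Q; split; [|split].
- move=> i Hi Hl; have := Ha1 i Hi Hl; qlra.
- move=> j Hj Hu; have := Hb2 j Hj (Ha2 j Hj Hu); qlra.
- move=> j Hj; case: (Qlt_le_dec a (v j)) => Hav.
  + have := Hb2 j Hj Hav; qlra.
  + qlra.
Qed.

Definition espec (R : nat -> nat -> Prop) (n : nat) (v : nat -> Q) (r : Q) : Prop :=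
  (forall m, (m < n)%N -> R m n -> (v m < r)%Q) /\
  (forall m, (m < n)%N -> R n m -> (r < v m)%Q) /\
  (forall m, (m < n)%N -> ~ (r == v m)%Q).

Definition epick (R : nat -> nat -> Prop) (n : nat) (v : nat -> Q) : Q :=
  epsilon (inhabits 0%Q) (espec R n v).

Fixpoint eqf (R : nat -> nat -> Prop) (n : nat) : nat -> Q :=
  match n with
  | O => fun _ => 0%Q
  | S k => fun m => if m == k then epick R k (eqf R k) else eqf R k m
  end.

Definition eqv R n := eqf R n.+1 n.

Lemma eqf_stable R n m : (m < n)%N -> eqf R n m = eqv R m.
Proof.
elim: n => [|n IH]; first by rewrite ltn0.
rewrite ltnS leq_eqVlt => /orP[/eqP->|Hm]; first by []. rewrite /=.
by case: ifP => [/eqP E|_]; [subst m; rewrite ltnn in Hm | exact: IH].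
Qed.

Lemma nat_embed (R : nat -> nat -> Prop)
  (Rtr : forall i j k, R i j -> R j k -> R i k) (Rirr : forall i, ~ R i i) :
  exists q : nat -> Q, (forall i j, R i j -> (q i < q j)%Q) /\
                       (forall i j, i <> j -> ~ (q i == q j)%Q).
Proof.
have key : forall n, espec R n (eqf R n) (eqv R n).
  elim/ltn_ind => n IH.
  have Hv : eqv R n = epick R n (eqf R n) by rewrite /eqv /= eqxx.
  rewrite Hv /epick; apply: epsilon_spec.
  have HH : forall i j, (i < n)%N -> (j < n)%N -> R i n -> R n j -> (eqf R n i < eqf R n j)%Q.
    move=> i j Hi Hj Hl Hu /=; rewrite !eqf_stable //.
    have Rij : R i j by apply: Rtr Hl Hu.
    case: (ltngtP i j) => [Hij|Hij|Eij].
    + have [+ _] := IH j Hj; move/(_ i Hij Rij); by rewrite eqf_stable.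
    + have [_ [+ _]] := IH i Hi; move/(_ j Hij Rij); by rewrite eqf_stable.
    + by subst j; case: (Rirr i).
  have [r [H1 [H2 H3]]] := lemC n (fun m => R m n) (fun m => R n m) (eqf R n) HH.
  exists r; split; [|split].
  - by move=> m Hm Hr; apply: H1.
  - by move=> m Hm Hr; apply: H2.
  - by move=> m Hm; apply: H3.
exists (eqv R); split.
- move=> i j Rij; case: (ltngtP i j) => [Hij|Hij|Eij].
  + have [+ _] := key j; move/(_ i Hij Rij); by rewrite eqf_stable.
  + have [_ [+ _]] := key i; move/(_ j Hij Rij); by rewrite eqf_stable.
  + by subst j; case: (Rirr i).
- move=> i j Nij; case: (ltngtP i j) => [Hij|Hij|Eij].
  + have [_ [_ +]] := key j; move/(_ i Hij); rewrite eqf_stable // => H E.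
    apply: H; by rewrite E.
  + have [_ [_ +]] := key i; move/(_ j Hij); by rewrite eqf_stable.
  + by [].
Qed.

Definition een {A : Type} (S : A -> Prop) (h : A -> nat) (dflt : A) (n : nat) : A :=
  epsilon (inhabits dflt) (fun a => S a /\ h a = n).

Lemma type_embed (A : Type) (S : A -> Prop) (h : A -> nat) (lt : A -> A -> Prop) (dflt : A)
 (hinj : forall a b, S a -> S b -> h a = h b -> a = b)
 (ltr : forall a b c, S a -> S b -> S c -> lt a b -> lt b c -> lt a c)
 (lirr : forall a, ~ lt a a) :
 exists q : A -> Q, (forall a b, S a -> S b -> lt a b -> (q a < q b)%Q) /\
   (forall a b, S a -> S b -> a <> b -> ~ (q a == q b)%Q).
Proof.
have enh : forall a, S a -> een S h dflt (h a) = a.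
  move=> a Sa; have := @epsilon_spec A (inhabits dflt) (fun b => S b /\ h b = h a).
  case; first by exists a.
  move=> Se He; apply: hinj => //.
pose R n m := S (een S h dflt n) /\ S (een S h dflt m) /\ lt (een S h dflt n) (een S h dflt m).
have Rtr : forall i j k, R i j -> R j k -> R i k.
  move=> i j k [Si [Sj Lij]] [_ [Sk Ljk]]; split; [done|split; [done|]].
  exact: ltr Lij Ljk.
have Rirr : forall i, ~ R i i by move=> i [_ [_ L]]; exact: (lirr _ L).
have [q [Hq1 Hq2]] := nat_embed R Rtr Rirr.
exists (fun a => q (h a)); split.
- move=> a b Sa Sb Lab; apply: Hq1; rewrite /R !enh //.
- move=> a b Sa Sb Nab; apply: Hq2 => E; apply: Nab; exact: hinj.
Qed.

Lemma v1 : nat_of_ord (inord 1 : 'I_3) = 1%N. Proof. by rewrite inordK. Qed.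
Lemma v2 : nat_of_ord (inord 2 : 'I_3) = 2%N. Proof. by rewrite inordK. Qed.
Lemma t1 : (ord0 : 'I_3) != inord 1. Proof. by rewrite -val_eqE /= v1. Qed.
Lemma t2 : (inord 2 : 'I_3) != inord 1. Proof. by rewrite -val_eqE /= v1 v2. Qed.
Lemma t3 : (ord0 : 'I_3) != inord 2. Proof. by rewrite -val_eqE /= v2. Qed.
Lemma t4 X (x y z : X) : triple_of x y z (inord 1) = y. Proof. by rewrite /triple_of v1. Qed.
Lemma t5 X (x y z : X) : triple_of x y z (tperm ord0 (inord 1) ord0) = y. Proof. by rewrite tpermL /triple_of v1. Qed.
Lemma t6 X (x y z : X) : triple_of x y z (tperm ord0 (inord 1) (inord 2)) = z. Proof. by rewrite tpermD ?t3 1?eq_sym ?t2 // /triple_of v2. Qed.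
Lemma t7 X (x y z : X) : triple_of x y z ((1 : 'S_3)%g (inord 2)) = z. Proof. by rewrite perm1 /triple_of v2. Qed.

Lemma rel_pow_trans (A : Type) (g : A -> A -> Prop) m n x y z :
  rel_pow g n x y -> rel_pow g m y z -> rel_pow g (S (m + n)) x z.
Proof.
elim: m z => [|m IH] z Hxy /=.
  by move=> Hyz; exists y.
move=> [w [Hyw Hwz]]; exists w; split=> //; exact: IH.
Qed.

Lemma tclosure_trans (A : Type) (g : A -> A -> Prop) x y z :
  tclosure g x y -> tclosure g y z -> tclosure g x z.
Proof. move=> [n H1] [m H2]; exists (S (m + n)); exact: rel_pow_trans H1 H2. Qed.

Lemma rel_pow_ends (A : Type) (g : A -> A -> Prop) n x y :
  rel_pow g n x y -> (exists c, g x c) /\ (exists c, g c y).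
Proof.
elim: n y => [|n IH] y /=.
  by move=> H; split; [exists y|exists x].
move=> [z [Hxz Hzy]]; have [[c Hc] _] := IH z Hxz; split; [by exists c|by exists z].
Qed.

Lemma rel_pow_mono (A : Type) (g : A -> A -> Prop) (F : A -> R) n x y :
  (forall a b, g a b -> Rle (F a) (F b)) -> rel_pow g n x y -> Rle (F x) (F y).
Proof.
move=> Hm; elim: n y => [|n IH] y /=; first exact: Hm.
move=> [z [Hxz Hzy]]; apply: Rle_trans (IH _ Hxz) (Hm _ _ Hzy).
Qed.

Lemma three_eq (p r s : R) :
  Rle p (Rmax s r) -> Rle s (Rmax p r) -> Rle r (Rmax p s) -> p = r \/ p = s \/ r = s.
Proof. unfold Rmax; repeat destruct Rle_dec; rlra. Qed.

Lemma Q2R0 : Q2R 0 = R0.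
Proof. rewrite /Q2R /=; rlra. Qed.

Arguments rel_pow_ends {A g n x y}.
Arguments rel_pow_mono {A g F n x y}.
Arguments tclosure_trans {A g x y z}.

Theorem corollary3p11 (X A : Type) (Phi : X -> X -> A)
  (hX : inhabited X) (hcount : countable_range Phi) :
  let cond_i :=
    exists d : X -> X -> R, ultrametric d /\
      (forall x y, nonneg_rational (d x y)) /\ comb_similar Phi d in
  let cond_ii :=
    exists (Z : Type) (d : Z -> Z -> R), ultrametric d /\ comb_similar Phi d in
  let cond_iii :=
    (forall x y, Phi x y = Phi y x) /\
    antisymmetric_rel (tclosure (u_rel Phi)) /\
    (exists a0, in_range Phi a0 /\ forall x y, Phi x y = a0 <-> x = y) /\
    (forall x1 x2 x3 : X, exists s : 'S_3,
       Phi (triple_of x1 x2 x3 (s ord0)) (triple_of x1 x2 x3 (s (inord 1))) =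
       Phi (triple_of x1 x2 x3 (s (inord 1))) (triple_of x1 x2 x3 (s (inord 2)))) in
  (cond_i <-> cond_ii) /\ (cond_ii <-> cond_iii).
Proof.
move=> ci cii ciii.
have i_ii : ci -> cii.
  by move=> [d [Ud [_ Cd]]]; exists X, d.
have ii_iii : cii -> ciii.
  move=> [Z [d [[d0 [dsym [dz dum]]] [f [g [[fr [finj fsur]] [[g' gK giK] Hd]]]]]]].
  have HF : forall x y, f (Phi x y) = d (g' x) (g' y) by move=> x y; rewrite Hd !giK.
  have inr : forall x y, in_range Phi (Phi x y) by move=> x y; exists x, y.
  have Psym : forall x y, Phi x y = Phi y x.
    move=> x y; apply: finj; [exact: inr|exact: inr|by rewrite !HF dsym].
  case: hX => x0.
  split; [exact: Psym|split; [|split]].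
  - have um : forall y1 y2, u_rel Phi y1 y2 -> Rle (f y1) (f y2).
      move=> y1 y2 [a [b [c [-> [E1 E2]]]]].
      have := dum (g' a) (g' c) (g' b); rewrite -!HF -E1 -E2.
      by unfold Rmax; destruct Rle_dec.
    move=> a b [n Hab] [m Hba].
    have Ra : in_range Phi a.
      have [[c [x1 [_ [x3 [E _]]]]] _] := rel_pow_ends Hab; exists x1, x3; by rewrite E.
    have Rb : in_range Phi b.
      have [_ [c [x1 [x2 [x3 [_ [E _]]]]]]] := rel_pow_ends Hab; exists x1, x2; by rewrite E.
    apply: finj Ra Rb _.
    exact: Rle_antisym (rel_pow_mono um Hab) (rel_pow_mono um Hba).
  - exists (Phi x0 x0); split; first exact: inr.
    move=> x y; split.
    + move=> E; have : f (Phi x y) = f (Phi x0 x0) by rewrite E.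
      rewrite !HF; have -> : d (g' x0) (g' x0) = R0 by apply/dz.
      move/dz => E'; by rewrite -(giK x) E' giK.
    + move=> ->; apply: finj; try exact: inr.
      rewrite !HF; have -> : d (g' x0) (g' x0) = R0 by apply/dz.
      by apply/dz.
  - move=> x1 x2 x3.
    have H1 := dum (g' x1) (g' x2) (g' x3).
    have H2 := dum (g' x1) (g' x3) (g' x2).
    have H3 := dum (g' x2) (g' x3) (g' x1).
    rewrite (dsym (g' x3) (g' x2)) in H1; rewrite (dsym (g' x2) (g' x1)) in H3.
    have := three_eq _ _ _ H1 H2 H3; rewrite -!HF.
    case=> [E|[E|E]].
    + exists 1%g; rewrite !perm1 /triple_of v1 v2 /=.
      by apply: finj; try exact: inr.
    + exists (tperm ord0 (inord 1)).
      rewrite tpermL tpermR tpermD ?t3 1?eq_sym ?t2 // /triple_of v1 v2 /=.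
      apply: finj; try exact: inr.
      rewrite Psym; exact: E.
    + exists (tperm (inord 1) (inord 2)).
      rewrite tpermL tpermR tpermD /triple_of ?v1 ?v2 /=; last first.
      all: try by rewrite eq_sym ?t1 ?t3.
      apply: finj; try exact: inr.
      by rewrite (Psym x3 x2) E.
have iii_i : ciii -> ci.
  move=> [Psym [Pas [[a0 [a0r Ha0]] Htri]]].
  case: hcount => h hinj.
  have inr : forall x y, in_range Phi (Phi x y) by move=> x y; exists x, y.
  pose lt a b := tclosure (u_rel Phi) a b /\ a <> b.
  have ltr : forall a b c, in_range Phi a -> in_range Phi b -> in_range Phi c ->
      lt a b -> lt b c -> lt a c.
    move=> a b c _ _ _ [Tab Nab] [Tbc Nbc]; split; first exact: tclosure_trans Tab Tbc.
    move=> Eac; subst c; apply: Nab; exact: Pas.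
  have lirr : forall a, ~ lt a a by move=> a [_ N].
  have [q [Hq1 Hq2]] := type_embed _ _ _ _ a0 hinj ltr lirr.
  have U : forall b c, u_rel Phi b c -> (q b <= q c)%Q.
    move=> b c Hbc; case: (classic (b = c)) => [->|Nbc]; first exact: Qle_refl.
    apply: Qlt_le_weak; apply: Hq1.
    - by case: Hbc => [x1 [_ [x3 [-> _]]]]; exact: inr.
    - by case: Hbc => [x1 [x2 [_ [_ [-> _]]]]]; exact: inr.
    - by split=> //; exists 0%N.
  have G : forall a b c, Phi a b = Phi b c -> (q (Phi a c) <= q (Phi a b))%Q.
    by move=> a b c E; apply: U; exists a, b, c.
  have amin : forall x y, (q a0 <= q (Phi x y))%Q.
    move=> x y; apply: U; exists x, y, x; split; first by symmetry; apply/Ha0.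
    by split=> //; apply: Psym.
  pose d x y := Q2R (q (Phi x y) - q a0).
  have dinj : forall a b, in_range Phi a -> in_range Phi b ->
      Q2R (q a - q a0) = Q2R (q b - q a0) -> a = b.
    move=> a b Ra Rb E; have E' := eqR_Qeq _ _ E.
    apply: NNPP => N; apply: (Hq2 a b Ra Rb N); qlra.
  exists d; split; [|split].
  - split; [|split; [|split]].
    + move=> x y; rewrite -Q2R0; apply: Qle_Rle; have := amin x y; qlra.
    + by move=> x y; rewrite /d Psym.
    + move=> x y; split.
      * move=> E; apply/Ha0; apply: (dinj _ _ (inr x y) a0r).
        transitivity (d x y) => //; rewrite E -Q2R0; apply: Qeq_eqR; qlra.
      * move=> <-; rewrite /d; have -> : Phi x x = a0 by apply/Ha0.
        rewrite -Q2R0; apply: Qeq_eqR; qlra.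
    + move=> x y z.
      suff : (q (Phi x y) <= q (Phi x z))%Q \/ (q (Phi x y) <= q (Phi z y))%Q.
        case=> H.
        * apply: Rle_trans (Rmax_l _ _); apply: Qle_Rle; qlra.
        * apply: Rle_trans (Rmax_r _ _); apply: Qle_Rle; qlra.
      have [s Es] := Htri x y z.
      have d01 : s ord0 != s (inord 1) by rewrite (inj_eq perm_inj) t1.
      have d02 : s ord0 != s (inord 2) by rewrite (inj_eq perm_inj) t3.
      have d12 : s (inord 1) != s (inord 2) by rewrite (inj_eq perm_inj) eq_sym t2.
      move: (s ord0) (s (inord 1)) (s (inord 2)) d01 d02 d12 Es.
      case=> [[|[|[|i]]] Hi] //; case=> [[|[|[|j]]] Hj] //; case=> [[|[|[|k]]] Hk] //;
        rewrite /triple_of /= => _ _ _ E.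
      * right; rewrite E (Psym z y); exact: Qle_refl.
      * left; exact: G E.
      * left; rewrite -E (Psym y x); exact: Qle_refl.
      * right; rewrite (Psym x y) (Psym z y); exact: G E.
      * left; rewrite -E (Psym z x); exact: Qle_refl.
      * right; rewrite E (Psym y x); exact: Qle_refl.
  - move=> x y; exists (q (Phi x y) - q a0)%Q; split=> //.
    have := amin x y; qlra.
  - exists (fun a => Q2R (q a - q a0)), id; split; [|split].
    + split; [|split].
      * by move=> a [x [y <-]]; exists x, y.
      * exact: dinj.
      * by move=> b [x [y <-]]; exists (Phi x y); split.
    + by exists id.
    + by [].
tauto.
Qed.
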